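(* Let $m,n\geq 2$ be integers, where any cycle $C_m$ or $C_n$ appearing below is assumed to have length at least $3$, and let $T_n$ ($T_m$) denote any tree of order $n$ ($m$). Then: 1. $C_{cc}(K_m\Box K_n)=\max\{m,n\}$. 2. $C_{cc}(K_m\Box C_n)=\max\{n,\ mn-2m\}$. 3. $C_{cc}(K_m\Box T_n)=\max\{n,\ mn-m\}$. 4. $C_{cc}(C_m\Box C_n)=\max\{mn-2n,\ mn-2m\}$. 5. $C_{cc}(C_m\Box T_n)=\max\{mn-2n,\ mn-m\}$. 6. $C_{cc}(T_m\Box T_n)=\max\{mn-n,\ mn-m\}$.
   Context: All graphs are finite, simple and undirected. $K_\ell$ is the complete graph, $C_\ell$ the cycle, of order $\ell$. For a graph $G$ and $S\subseteq V(G)$, the cycle interval $\langle S\rangle$ consists of the vertices of $S$ together with every vertex $w\in V(G)\setminus S$ such that $G[S\cup\{w\}]$ contains a cycle through $w$; $S$ is cycle convex if $\langle S\rangle=S$. The cycle convexity number $C_{cc}(G)$ is the maximum cardinality of a proper (i.e. $\neq V(G)$) cycle convex subset of $V(G)$. The Cartesian product $G\Box H$ has vertex set $V(G)\times V(H)$, with $(g_1,h_1)\sim(g_2,h_2)$ iff ($g_1\sim g_2$ and $h_1=h_2$) or ($g_1=g_2$ and $h_1\sim h_2$). *)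

(* Defs.v *)
From mathcomp Require Import all_boot.
Set Implicit Arguments. Unset Strict Implicit. Unset Printing Implicit Defensive.

Section Graphs.
Variable T : finType.
Implicit Types (e : rel T) (S : {set T}).

Definition simple_graph e := symmetric e /\ irreflexive e.

(* w lies on a cycle of the induced subgraph G[S :|: [set w]]:
   distinct vertices w, v1, ..., vk (k >= 2), all vi in S, with consecutive
   vertices adjacent and vk adjacent to w. *)
Definition cycle_through e S w :=
  exists p : seq T, [/\ 2 <= size p, uniq (w :: p), all (fun v => v \in S) p,
                        path e w p & e (last w p) w].

(* S is cycle convex: <S> = S, i.e. no vertex outside S lies on a cycle of
   G[S u {w}] through w. *)
Definition cycle_convex e S := forall w, w \notin S -> ~ cycle_through e S w.

Definition Ccc_is e (k : nat) :=
  (exists S, [/\ S != [set: T], cycle_convex e S & #|S| = k]) /\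
  (forall S, S != [set: T] -> cycle_convex e S -> #|S| <= k).

Definition connected_graph e := forall x y, connect e x y.

Definition acyclic e := forall w, ~ cycle_through e [set: T] w.

Definition is_tree e := [/\ simple_graph e, connected_graph e & acyclic e].
End Graphs.

Definition cartesian (T1 T2 : finType) (e1 : rel T1) (e2 : rel T2) : rel (T1 * T2) :=
  fun x y => (e1 x.1 y.1 && (x.2 == y.2)) || ((x.1 == y.1) && e2 x.2 y.2).

Definition Kgraph (n : nat) : rel 'I_n := fun i j => i != j.

(* cycle C_n on 'I_n (used for n >= 3) *)
Definition Cgraph (n : nat) : rel 'I_n :=
  fun i j => (j == (i.+1 %% n) :> nat) || (i == (j.+1 %% n) :> nat).
Arguments Kgraph n : clear implicits.
Arguments Cgraph n : clear implicits.

(* Main.v *)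
Require Import Defs.
From mathcomp Require Import all_boot zify.
Set Implicit Arguments. Unset Strict Implicit. Unset Printing Implicit Defensive.

Lemma ct_mono (T : finType) (e : rel T) (S S' : {set T}) w :
  S \subset S' -> cycle_through e S w -> cycle_through e S' w.
Proof.
move=> sub [p [h1 h2 h3 h4 h5]]; exists p; split=> //.
by apply/allP=> v vp; apply: (subsetP sub); apply: (allP h3).
Qed.

Lemma ct_two (T : finType) (e : rel T) (S : {set T}) w :
  symmetric e -> cycle_through e S w ->
  exists x y, [/\ x \in S, y \in S, x != y, e w x & e w y].
Proof.
move=> sym [[|x [|z q]] [//= h1 h2 h3 h4 h5]].
exists x, (last z q).
move: h2 h3 h4 h5 => /=.
case/andP=> _ /andP [xn _] /and3P [xS zS /allP qS] /andP [ewx _] ey.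
split=> //.
- have : last z q \in z :: q by apply: mem_last.
  rewrite inE => /orP [/eqP -> // | /qS //].
- apply/negP=> /eqP exl; move: xn; rewrite exl.
  by rewrite (mem_last z q).
- by rewrite sym.
Qed.

Lemma lift1 (T1 T2 : finType) (e1 : rel T1) (e2 : rel T2) (S : {set T1 * T2}) g b :
  cycle_through e2 [set h | (g, h) \in S] b -> cycle_through (cartesian e1 e2) S (g, b).
Proof.
move=> [p [h1 h2 h3 h4 h5]]; exists (map (pair g) p); split.
- by rewrite size_map.
- have -> : (g, b) :: map (pair g) p = map (pair g) (b :: p) by [].
  by rewrite map_inj_uniq // => x y [].
- by apply/allP=> v /mapP [h hp ->]; move: (allP h3 h hp); rewrite inE.
- elim: p b h4 {h1 h2 h3 h5} => //= x p IH b /andP [ebx px].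
  by rewrite IH // /cartesian /= eqxx ebx orbT.
- rewrite last_map /cartesian /= eqxx h5 orbT //.
Qed.

Lemma lift2 (T1 T2 : finType) (e1 : rel T1) (e2 : rel T2) (S : {set T1 * T2}) h a :
  cycle_through e1 [set g | (g, h) \in S] a -> cycle_through (cartesian e1 e2) S (a, h).
Proof.
move=> [p [h1 h2 h3 h4 h5]]; exists (map (pair^~ h) p); split.
- by rewrite size_map.
- have -> : (a, h) :: map (pair^~ h) p = map (pair^~ h) (a :: p) by [].
  by rewrite map_inj_uniq // => x y [].
- by apply/allP=> v /mapP [g gp ->]; move: (allP h3 g gp); rewrite inE.
- elim: p a h4 {h1 h2 h3 h5} => //= x p IH a /andP [ebx px].
  by rewrite IH // /cartesian /= eqxx ebx.
- rewrite last_map /cartesian /= eqxx h5 //.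
Qed.

Lemma fib1_convex (T1 T2 : finType) (e1 : rel T1) (e2 : rel T2) (S : {set T1 * T2}) g :
  cycle_convex (cartesian e1 e2) S -> cycle_convex e2 [set h | (g, h) \in S].
Proof.
move=> cv w; rewrite inE => wn ct; exact: (cv _ wn (lift1 e1 ct)).
Qed.

Lemma fib2_convex (T1 T2 : finType) (e1 : rel T1) (e2 : rel T2) (S : {set T1 * T2}) h :
  cycle_convex (cartesian e1 e2) S -> cycle_convex e1 [set g | (g, h) \in S].
Proof.
move=> cv w; rewrite inE => wn ct; exact: (cv _ wn (lift2 e2 ct)).
Qed.


Lemma cross (T1 T2 : finType) (e1 : rel T1) (e2 : rel T2) (S : {set T1 * T2}) g h :
  simple_graph e1 -> simple_graph e2 -> connected_graph e1 -> connected_graph e2 ->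
  cycle_convex (cartesian e1 e2) S ->
  (forall b, (g, b) \in S) -> (forall a, (a, h) \in S) -> forall x, x \in S.
Proof.
move=> [s1 i1] [s2 i2] c1 c2 cv Hg Hh [a b].
have [p1 p1p ->] := connectP (c1 g a).
have [p2 p2p ->] := connectP (c2 h b).
elim/last_ind: p1 p1p p2 p2p => [|q a' IH] //.
rewrite rcons_path last_rcons => /andP [qp ea] p2.
move: (IH qp) => {}IH.
elim/last_ind: p2 => [|r b' IH2]; first by rewrite /= Hh.
rewrite rcons_path last_rcons => /andP [rp eb].
move: (IH2 rp) => {}IH2.
set x := last g q in IH ea *; set y := last h r in IH2 eb *.
case: (boolP ((a', b') \in S)) => // nS.
exfalso; apply: (cv _ nS).
have axa : x != a' by apply/eqP=> E; move: ea; rewrite E i1.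
have byb : y != b' by apply/eqP=> E; move: eb; rewrite E i2.
exists [:: (x, b'); (x, y); (a', y)]; split => //.
- rewrite /= !inE !xpair_eqE !eqxx /= ?andbT ?andTb.
  by rewrite [a' == x]eq_sym [b' == y]eq_sym (negbTE axa) (negbTE byb).
- have := IH (rcons r b'); rewrite rcons_path rp eb last_rcons => /(_ isT) H1.
  by rewrite /= H1 (IH r rp) IH2.
- by rewrite /= /cartesian /= !eqxx s1 ea s2 eb /= !orbT.
- by rewrite /= /cartesian /= !eqxx eb orbT.
Qed.


Lemma cntA (T1 T2 : finType) (S : {set T1 * T2}) :
  #|S| = \sum_(g : T1) \sum_(h : T2) (((g, h) \in S) : nat).
Proof.
transitivity (\sum_(p : T1 * T2) ((p \in S) : nat)).
  by rewrite -sum1_card big_mkcond; apply: eq_bigr => p _; case: (p \in S).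
by rewrite pair_bigA; apply: eq_bigr => -[g h] _.
Qed.

Lemma cnt1 (T1 T2 : finType) (S : {set T1 * T2}) :
  #|S| = \sum_(g : T1) #|[set h | (g, h) \in S]|.
Proof.
rewrite cntA; apply: eq_bigr => g _; rewrite -sum1_card [RHS]big_mkcond; apply: eq_bigr => h _.
by rewrite inE; case: ((g, h) \in S).
Qed.

Lemma cnt2 (T1 T2 : finType) (S : {set T1 * T2}) :
  #|S| = \sum_(h : T2) #|[set g | (g, h) \in S]|.
Proof.
rewrite cntA exchange_big /=; apply: eq_bigr => h _.
rewrite -sum1_card [RHS]big_mkcond; apply: eq_bigr => g _.
by rewrite inE; case: ((g, h) \in S).
Qed.

Lemma UB (T1 T2 : finType) (e1 : rel T1) (e2 : rel T2) (c1 c2 : nat) :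
  simple_graph e1 -> simple_graph e2 -> connected_graph e1 -> connected_graph e2 ->
  (forall F : {set T2}, cycle_convex e2 F -> F != setT -> #|F| <= c1) ->
  (forall F : {set T1}, cycle_convex e1 F -> F != setT -> #|F| <= c2) ->
  forall S : {set T1 * T2}, S != setT -> cycle_convex (cartesian e1 e2) S ->
  #|S| <= maxn (#|T1| * c1) (#|T2| * c2).
Proof.
move=> sg1 sg2 cn1 cn2 H1 H2 S nT cv.
case: (boolP [forall g, [set h | (g, h) \in S] != setT]) => [/forallP A1 | ].
  rewrite leq_max; apply/orP; left; rewrite cnt1 -sum_nat_const.
  by apply: leq_sum => g _; apply: H1; [exact: (fib1_convex cv) | exact: A1].
rewrite negb_forall => /existsP [g]; rewrite negbK => /eqP Fg.
case: (boolP [forall h, [set g | (g, h) \in S] != setT]) => [/forallP A2 | ].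
  rewrite leq_max; apply/orP; right; rewrite cnt2 -sum_nat_const.
  by apply: leq_sum => h _; apply: H2; [exact: (fib2_convex cv) | exact: A2].
rewrite negb_forall => /existsP [h]; rewrite negbK => /eqP Fh.
exfalso; move/negP: nT; apply; apply/eqP/setP => x; rewrite inE.
apply: (cross sg1 sg2 cn1 cn2 cv (g := g) (h := h)).
  move=> b; have : b \in [set h | (g, h) \in S] by rewrite Fg inE.
  by rewrite inE.
move=> a; have : a \in [set g | (g, h) \in S] by rewrite Fh inE.
  by rewrite inE.
Qed.


Lemma fibT (T : finType) (F : {set T}) : F != setT -> #|F| <= #|T| - 1.
Proof.
move=> nT; have [a aF] : exists a, a \notin F.
  apply/existsP; rewrite -negb_forall; apply: contra nT => /forallP H.
  by apply/eqP/setP => x; rewrite inE H.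
have := cardsC F; have : 0 < #|~: F| by apply/card_gt0P; exists a; rewrite inE.
lia.
Qed.

Lemma fibK n (F : {set 'I_n}) : cycle_convex (Kgraph n) F -> F != setT -> #|F| <= 1.
Proof.
move=> cv nT; have [a aF] : exists a, a \notin F.
  apply/existsP; rewrite -negb_forall; apply: contra nT => /forallP H.
  by apply/eqP/setP => x; rewrite inE H.
rewrite leqNgt; apply/negP => /card_gt1P [x [y [xF yF xy]]].
apply: (cv _ aF); exists [:: x; y]; split => //=.
- rewrite !inE negb_or xy !andbT; apply/andP; split.
  + by apply: contraNneq aF => ->.
  + by apply: contraNneq aF => ->.
- by rewrite xF yF.
- rewrite /Kgraph xy /= andbT; by apply: contraNneq aF => ->.
- rewrite /Kgraph; by apply: contraNneq aF => <-.
Qed.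

Section Cyc.
Variable n : nat.
Hypothesis n0 : 0 < n.

Definition fC (a : 'I_n) (k : nat) : 'I_n := Ordinal (ltn_pmod (a + k) n0).

Lemma fC_step a k : Cgraph n (fC a k) (fC a k.+1).
Proof.
apply/orP; left; rewrite /=.
by rewrite -[((a + k) %% n).+1]addn1 modnDml addn1 addnS.
Qed.

Lemma fC_path a k s : path (Cgraph n) (fC a s) (map (fC a) (iota s.+1 k)).
Proof.
elim: k s => //= k IH s; rewrite fC_step; exact: IH.
Qed.

Lemma fC_last a k s : last (fC a s) (map (fC a) (iota s.+1 k)) = fC a (s + k).
Proof.
elim: k s => [|k IH] s /=; first by rewrite addn0.
by rewrite IH addSnnS.
Qed.

Lemma fC0 a : fC a 0 = a.
Proof. by apply: val_inj; rewrite /= addn0 modn_small. Qed.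

Lemma fCn a : fC a n = a.
Proof. by apply: val_inj; rewrite /= modnDr modn_small. Qed.

Lemma fC_inj a : {in iota 0 n &, injective (fC a)}.
Proof.
move=> i j; rewrite !mem_iota !add0n => /andP [_ i_lt] /andP [_ j_lt] /(congr1 val) /=.
move/eqP; rewrite eqn_modDl !modn_small // => /eqP //.
Qed.

Lemma C_cycle a : 3 <= n -> cycle_through (Cgraph n) [set x | x != a] a.
Proof.
move=> n3.
have uq : uniq (a :: map (fC a) (iota 1 n.-1)).
  have -> : a :: map (fC a) (iota 1 n.-1) = map (fC a) (iota 0 n).
    have -> : iota 0 n = 0 :: iota 1 n.-1 by rewrite -{1}(prednK n0).
    by rewrite /= fC0.
  by rewrite map_inj_in_uniq ?iota_uniq //; apply: fC_inj.
exists (map (fC a) (iota 1 n.-1)); split => //.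
- rewrite size_map size_iota; lia.
- apply/allP => v vp; rewrite inE; apply/eqP => va; move: uq => /= /andP [H _]; by move: H; rewrite -{1}va vp.
- by rewrite -{1}(fC0 a) fC_path.
- rewrite -{1}(fC0 a) fC_last add0n -{2}(fCn a); have := fC_step a n.-1; by rewrite (prednK n0).
Qed.

Lemma C_conn : connected_graph (Cgraph n).
Proof.
move=> i j; apply/connectP.
exists (map (fC i) (iota 1 (n + j - i))); first by rewrite -{1}(fC0 i) fC_path.
rewrite -{1}(fC0 i) fC_last add0n; apply: val_inj => /=.
have -> : i + (n + j - i) = j + n by have := ltn_ord i; lia.
by rewrite modnDr modn_small.
Qed.

End Cyc.

Lemma fibC n (F : {set 'I_n}) : 3 <= n -> cycle_convex (Cgraph n) F -> F != setT -> #|F| <= n - 2.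
Proof.
move=> n3 cv nT; have [a aF] : exists a, a \notin F.
  apply/existsP; rewrite -negb_forall; apply: contra nT => /forallP H.
  by apply/eqP/setP => x; rewrite inE H.
rewrite leqNgt; apply/negP => big.
have n0 : 0 < n by lia.
apply: (cv _ aF); apply: ct_mono (C_cycle n0 a n3).
apply/subsetP => x; rewrite inE => xa.
case: (boolP (x \in F)) => // xF; exfalso.
have : [set a; x] \subset ~: F by apply/subsetP => y; rewrite !inE => /orP [] /eqP ->.
move/subset_leq_card; rewrite cards2 eq_sym xa.
have := cardsC F; rewrite card_ord; lia.
Qed.


Lemma cart_sym (T1 T2 : finType) (e1 : rel T1) (e2 : rel T2) :
  symmetric e1 -> symmetric e2 -> symmetric (cartesian e1 e2).
Proof.
move=> s1 s2 [a b] [c d]; rewrite /cartesian /= s1 s2.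
by rewrite [b == d]eq_sym [a == c]eq_sym.
Qed.

Lemma LB1 (T1 T2 : finType) (e1 : rel T1) (e2 : rel T2) (A : {set T1}) :
  symmetric e1 -> symmetric e2 ->
  (forall a, a \notin A -> forall x y, x \in A -> y \in A -> e1 a x -> e1 a y -> x = y) ->
  cycle_convex (cartesian e1 e2) (setX A setT).
Proof.
move=> s1 s2 H [a b]; rewrite !inE /= andbT => aA ct.
have [[x1 x2] [[y1 y2] [xS yS xy ex ey]]] := ct_two (cart_sym s1 s2) ct.
move: xS yS; rewrite !inE /= !andbT => xA yA.
have ax : a != x1 by apply: contraNneq aA => ->.
have ay : a != y1 by apply: contraNneq aA => ->.
move: ex ey; rewrite /cartesian /= (negbTE ax) (negbTE ay) /= !orbF.
case/andP => ex /eqP bx /andP [ey /eqP by_]; subst x2 y2.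
by move: xy; rewrite (H a aA x1 y1 xA yA ex ey) eqxx.
Qed.

Lemma LB2 (T1 T2 : finType) (e1 : rel T1) (e2 : rel T2) (B : {set T2}) :
  symmetric e1 -> symmetric e2 ->
  (forall a, a \notin B -> forall x y, x \in B -> y \in B -> e2 a x -> e2 a y -> x = y) ->
  cycle_convex (cartesian e1 e2) (setX setT B).
Proof.
move=> s1 s2 H [a b]; rewrite !inE /= => aA ct.
have [[x1 x2] [[y1 y2] [xS yS xy ex ey]]] := ct_two (cart_sym s1 s2) ct.
move: xS yS; rewrite !inE /= => xA yA.
have ax : b != x2 by apply: contraNneq aA => ->.
have ay : b != y2 by apply: contraNneq aA => ->.
move: ex ey; rewrite /cartesian /= (negbTE ax) (negbTE ay) /= !andbF /=.
case/andP => /eqP ax2 ex /andP [/eqP ay2 ey]; subst x1 y1.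
by move: xy; rewrite (H b aA x2 y2 xA yA ex ey) eqxx.
Qed.

Lemma leaf_exists (T : finType) (e : rel T) :
  simple_graph e -> acyclic e -> T -> exists v, forall x y, e v x -> e v y -> x = y.
Proof.
move=> [sy ir] ac w0.
suff : forall k w p, uniq (w :: p) -> path e w p -> #|T| - size p <= k ->
  exists v, forall x y, e v x -> e v y -> x = y.
  by move/(_ #|T| w0 [::]); apply => //; rewrite subn0.
elim=> [|k IH] w p uq pp hk.
  by exfalso; have := max_card (mem (w :: p)); rewrite (card_uniqP uq) /= => H0; move: hk; rewrite leqn0 subn_eq0 leqNgt H0.
case: (boolP [forall x, forall y, e w x ==> e w y ==> (x == y)]).
  move=> /forallP H; exists w => x y ex ey.
  by move/forallP: (H x) => /(_ y); rewrite ex ey => /eqP.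
rewrite negb_forall => /existsP [x]; rewrite negb_forall => /existsP [y].
rewrite !negb_imply => /and3P [ex ey xy].
have Hext : forall u, e w u -> u \notin p -> exists v, forall x y, e v x -> e v y -> x = y.
  move=> u eu up; apply: (IH u (w :: p)).
  - rewrite /= inE negb_or up andbT; apply/andP; split; last exact: uq.
    by apply/eqP => E; move: eu; rewrite E ir.
  - by rewrite /= sy eu.
  - by rewrite /= subnS -subn1 leq_subLR add1n.
case: (boolP (x \in p)) => xp; last exact: (Hext x ex xp).
case: (boolP (y \in p)) => yp; last exact: (Hext y ey yp).
exfalso.
clear Hext; case: p uq pp hk xp yp => // z q uq pp _ xp yp.
have [u [up eu uz]] : exists u, [/\ u \in z :: q, e w u & u != z].
  case: (eqVneq x z) => [xz | xz]; last by exists x.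
  by exists y; split => //; rewrite -xz eq_sym.
move: up; rewrite inE (negbTE uz) /= => uq'.
case/splitPr: uq' uq pp => q1 q2 uq pp.
apply: (ac w); exists (z :: rcons q1 u); split => //.
- by rewrite /= size_rcons.
- move: uq; rewrite -cat_rcons -[z :: (rcons q1 u ++ q2)]/((z :: rcons q1 u) ++ q2).
  by rewrite -cat_cons cat_uniq => /andP [].
- by apply/allP => v _; rewrite inE.
- move: pp; rewrite -cat_rcons -cat_cons cat_path => /andP [].
  done.
- by rewrite /= last_rcons sy.
Qed.


Lemma K_simple n : simple_graph (Kgraph n).
Proof. by split=> [i j|i]; rewrite /Kgraph ?eqxx // eq_sym. Qed.

Lemma K_conn n : connected_graph (Kgraph n).
Proof.
move=> i j; case: (eqVneq i j) => [->|ij]; first exact: connect0.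
by apply: connect1.
Qed.

Lemma modS_cases n (i : 'I_n) :
  (i.+1 %% n = i.+1 /\ i.+1 < n) \/ (i.+1 %% n = 0 /\ i.+1 = n).
Proof.
have := ltn_ord i; rewrite leq_eqVlt => /orP [/eqP E | lt].
  by right; rewrite E modnn.
by left; rewrite modn_small.
Qed.

Lemma C_simple n : 2 <= n -> simple_graph (Cgraph n).
Proof.
move=> n2; split=> [i j|i]; first by rewrite /Cgraph orbC.
rewrite /Cgraph orbb; apply/negP => /eqP.
case: (modS_cases i) => -[-> H]; lia.
Qed.

Lemma C_adj n (i j : 'I_n) : Cgraph n i j ->
  ((j : nat) = i.+1 /\ i.+1 < n) \/ ((j : nat) = 0 /\ i.+1 = n) \/
  ((i : nat) = j.+1 /\ j.+1 < n) \/ ((i : nat) = 0 /\ j.+1 = n).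
Proof.
rewrite /Cgraph => /orP [] /eqP E.
  by case: (modS_cases i) => -[E' H]; rewrite E' in E; [left | right; left].
by case: (modS_cases j) => -[E' H]; rewrite E' in E; [right; right; left | right; right; right].
Qed.

Lemma C_nb n (b x y : 'I_n) : 3 <= n -> (b : nat) <= 1 -> 2 <= x -> 2 <= y ->
  Cgraph n b x -> Cgraph n b y -> x = y.
Proof.
move=> n3 b1 x2 y2 /C_adj E1 /C_adj E2; apply: val_inj => /=.
have := ltn_ord x; have := ltn_ord y; lia.
Qed.

Lemma tree_leaf (T : finType) (e : rel T) : is_tree e -> T ->
  exists v, forall x y, e v x -> e v y -> x = y.
Proof. by move=> [s _ a] w; apply: leaf_exists. Qed.

Lemma Ccc_of (T : finType) (e : rel T) x y (S1 S2 : {set T}) :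
  S1 != setT -> cycle_convex e S1 -> #|S1| = x ->
  S2 != setT -> cycle_convex e S2 -> #|S2| = y ->
  (forall S, S != setT -> cycle_convex e S -> #|S| <= maxn x y) ->
  Ccc_is e (maxn x y).
Proof.
move=> p1 c1 h1 p2 c2 h2 U; split=> //.
case: (leqP x y) => xy.
  by exists S2; split => //; rewrite h2; apply/esym/maxn_idPr.
by exists S1; split => //; rewrite h1; apply/esym/maxn_idPl/ltnW.
Qed.

Lemma gen (T1 T2 : finType) (e1 : rel T1) (e2 : rel T2) (A : {set T1}) (B : {set T2})
  a1 b1 (c1 c2 k : nat) :
  simple_graph e1 -> simple_graph e2 -> connected_graph e1 -> connected_graph e2 ->
  a1 \notin A -> b1 \notin B ->
  (forall a, a \notin A -> forall x y, x \in A -> y \in A -> e1 a x -> e1 a y -> x = y) ->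
  (forall a, a \notin B -> forall x y, x \in B -> y \in B -> e2 a x -> e2 a y -> x = y) ->
  (forall F : {set T2}, cycle_convex e2 F -> F != setT -> #|F| <= c1) ->
  (forall F : {set T1}, cycle_convex e1 F -> F != setT -> #|F| <= c2) ->
  k = maxn (#|A| * #|T2|) (#|T1| * #|B|) ->
  maxn (#|T1| * c1) (#|T2| * c2) <= k ->
  Ccc_is (cartesian e1 e2) k.
Proof.
move=> sg1 sg2 cn1 cn2 aA bB HA HB H1 H2 -> le.
apply: (Ccc_of (S1 := setX A [set: T2]) (S2 := setX [set: T1] B)).
- apply/eqP => E; have : (a1, b1) \in setX A [set: T2] by rewrite E inE.
  by rewrite !inE (negbTE aA).
- exact: LB1 sg1.1 sg2.1 HA.
- by rewrite cardsX cardsT.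
- apply/eqP => E; have : (a1, b1) \in setX [set: T1] B by rewrite E inE.
  by rewrite !inE (negbTE bB).
- exact: LB2 sg1.1 sg2.1 HB.
- by rewrite cardsX cardsT.
- move=> S nS cS; apply: leq_trans le; exact: (UB sg1 sg2 cn1 cn2 H1 H2 nS cS).
Qed.


Lemma HA_single (T : finType) (e : rel T) g :
  forall a, a \notin [set g] -> forall x y, x \in [set g] -> y \in [set g] -> e a x -> e a y -> x = y.
Proof. by move=> a _ x y; rewrite !inE => /eqP -> /eqP ->. Qed.

Lemma HA_leaf (T : finType) (e : rel T) v :
  (forall x y, e v x -> e v y -> x = y) ->
  forall a, a \notin ~: [set v] -> forall x y, x \in ~: [set v] -> y \in ~: [set v] ->
  e a x -> e a y -> x = y.
Proof. by move=> H a; rewrite !inE negbK => /eqP -> x y _ _; apply: H. Qed.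

Definition o0 n (h : 2 <= n) : 'I_n := Ordinal (ltnW h).
Definition o1 n (h : 2 <= n) : 'I_n := Ordinal h.

Lemma HA_C n (h : 2 <= n) : 3 <= n ->
  forall a, a \notin ~: [set o0 h; o1 h] -> forall x y, x \in ~: [set o0 h; o1 h] ->
  y \in ~: [set o0 h; o1 h] -> Cgraph n a x -> Cgraph n a y -> x = y.
Proof.
move=> n3 a; rewrite !inE negbK => ha x y; rewrite !inE !negb_or => /andP [x0 x1] /andP [y0 y1].
apply: C_nb => //.
- by case/orP: ha => /eqP ->.
- by move: x0 x1; rewrite -!val_eqE /=; lia.
- by move: y0 y1; rewrite -!val_eqE /=; lia.
Qed.

Lemma card_C n (h : 2 <= n) : #|~: [set o0 h; o1 h]| = n - 2.
Proof.
have := cardsC [set o0 h; o1 h]; rewrite cards2 card_ord.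
have -> : o0 h != o1 h by rewrite -val_eqE.
lia.
Qed.

Lemma card_leaf (T : finType) (v : T) : #|~: [set v]| = #|T| - 1.
Proof. have := cardsC [set v]; rewrite cards1; lia. Qed.

Lemma notin_C n (h : 2 <= n) : o0 h \notin ~: [set o0 h; o1 h].
Proof. by rewrite !inE eqxx. Qed.

Lemma notin_leaf (T : finType) (v : T) : v \notin ~: [set v].
Proof. by rewrite !inE eqxx. Qed.

Lemma notin_single n (h : 2 <= n) : o1 h \notin [set o0 h].
Proof. by rewrite !inE -val_eqE. Qed.

Lemma fibT' (T : finType) (e : rel T) (F : {set T}) : cycle_convex e F -> F != setT -> #|F| <= #|T| - 1.
Proof. by move=> _; apply: fibT. Qed.

Unset Implicit Arguments.
Theorem mainTheorem13 (m n : nat) (hm : 2 <= m) (hn : 2 <= n) :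
  (* 1 *) Ccc_is (cartesian (Kgraph m) (Kgraph n)) (maxn m n) /\
  (* 2 *) (3 <= n -> Ccc_is (cartesian (Kgraph m) (Cgraph n)) (maxn n (m * n - 2 * m))) /\
  (* 3 *) (forall (Tn : finType) (tn : rel Tn), is_tree tn -> #|Tn| = n ->
             Ccc_is (cartesian (Kgraph m) tn) (maxn n (m * n - m))) /\
  (* 4 *) (3 <= m -> 3 <= n ->
             Ccc_is (cartesian (Cgraph m) (Cgraph n)) (maxn (m * n - 2 * n) (m * n - 2 * m))) /\
  (* 5 *) (3 <= m -> forall (Tn : finType) (tn : rel Tn), is_tree tn -> #|Tn| = n ->
             Ccc_is (cartesian (Cgraph m) tn) (maxn (m * n - 2 * n) (m * n - m))) /\
  (* 6 *) (forall (Tm Tn : finType) (tm : rel Tm) (tn : rel Tn),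
             is_tree tm -> #|Tm| = m -> is_tree tn -> #|Tn| = n ->
             Ccc_is (cartesian tm tn) (maxn (m * n - n) (m * n - m))).
Proof.
have tinh : forall (T : finType) k, 2 <= k -> #|T| = k -> T.
  move=> T k hk hT; have : 0 < #|T| by lia.
  by case/card_gt0P/sigW => x _.
split; [|split; [|split; [|split; [|split]]]].
- apply: (gen (A := [set o0 hm]) (B := [set o0 hn]) (a1 := o1 hm) (b1 := o1 hn)
    (c1 := 1) (c2 := 1) (@K_simple m) (@K_simple n) (@K_conn m) (@K_conn n)).
  + exact: notin_single.
  + exact: notin_single.
  + exact: HA_single.
  + exact: HA_single.
  + exact: fibK.
  + exact: fibK.
  + rewrite !cards1 !card_ord; lia.
  + rewrite !card_ord; lia.
- move=> n3.
  apply: (gen (A := [set o0 hm]) (B := ~: [set o0 hn; o1 hn]) (a1 := o1 hm) (b1 := o0 hn)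
    (c1 := n - 2) (c2 := 1) (@K_simple m) (C_simple hn) (@K_conn m) (C_conn (ltnW hn))).
  + exact: notin_single.
  + exact: notin_C.
  + exact: HA_single.
  + exact: HA_C.
  + by move=> F; apply: fibC.
  + exact: fibK.
  + rewrite !cards1 card_C !card_ord; nia.
  + rewrite !card_ord; nia.
- move=> Tn tn ttn cn.
  have [v hv] := tree_leaf ttn (tinh _ _ hn cn).
  case: ttn => sg cg ag.
  apply: (gen (A := [set o0 hm]) (B := ~: [set v]) (a1 := o1 hm) (b1 := v)
    (c1 := n - 1) (c2 := 1) (@K_simple m) sg (@K_conn m) cg).
  + exact: notin_single.
  + exact: notin_leaf.
  + exact: HA_single.
  + exact: HA_leaf.
  + by rewrite -cn; apply: fibT'.
  + exact: fibK.
  + rewrite !cards1 card_leaf !card_ord cn; nia.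
  + rewrite !card_ord cn; nia.
- move=> m3 n3.
  apply: (gen (A := ~: [set o0 hm; o1 hm]) (B := ~: [set o0 hn; o1 hn]) (a1 := o0 hm) (b1 := o0 hn)
    (c1 := n - 2) (c2 := m - 2) (C_simple hm) (C_simple hn) (C_conn (ltnW hm)) (C_conn (ltnW hn))).
  + exact: notin_C.
  + exact: notin_C.
  + exact: HA_C.
  + exact: HA_C.
  + by move=> F; apply: fibC.
  + by move=> F; apply: fibC.
  + rewrite !card_C !card_ord; nia.
  + rewrite !card_ord; nia.
- move=> m3 Tn tn ttn cn.
  have [v hv] := tree_leaf ttn (tinh _ _ hn cn).
  case: ttn => sg cg ag.
  apply: (gen (A := ~: [set o0 hm; o1 hm]) (B := ~: [set v]) (a1 := o0 hm) (b1 := v)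
    (c1 := n - 1) (c2 := m - 2) (C_simple hm) sg (C_conn (ltnW hm)) cg).
  + exact: notin_C.
  + exact: notin_leaf.
  + exact: HA_C.
  + exact: HA_leaf.
  + by rewrite -cn; apply: fibT'.
  + by move=> F; apply: fibC.
  + rewrite card_C card_leaf !card_ord cn; nia.
  + rewrite !card_ord cn; nia.
- move=> Tm Tn tm tn ttm cm ttn cn.
  have [u hu] := tree_leaf ttm (tinh _ _ hm cm).
  have [v hv] := tree_leaf ttn (tinh _ _ hn cn).
  case: ttm => sgm cgm agm; case: ttn => sg cg ag.
  apply: (gen (A := ~: [set u]) (B := ~: [set v]) (a1 := u) (b1 := v)
    (c1 := n - 1) (c2 := m - 1) sgm sg cgm cg).
  + exact: notin_leaf.
  + exact: notin_leaf.
  + exact: HA_leaf.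
  + exact: HA_leaf.
  + by rewrite -cn; apply: fibT'.
  + by rewrite -cm; apply: fibT'.
  + rewrite !card_leaf cn cm; nia.
  + rewrite cn cm; nia.
Qed.
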